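(* Let $n\ge2$, $\omega\in\mathbb{R}^n$, $k\in\mathbb{R}_{>0}^n$ satisfy (IC1) $\sum_\mu\omega_\mu=0$, (IC2) $\omega\ne0$, (IC3) $\left|\frac{\omega_1}{k_1}\right|\le\cdots\le\left|\frac{\omega_n}{k_n}\right|$. Define $$g(R)=\prod_{\sigma\in\{-1,+1\}^n}\left(-R+\frac1n\sum_{\mu=1}^n\sigma_\mu\sqrt{k_\mu^2R-\omega_\mu^2}\right).$$ Then $g$ is a polynomial in $R$ of degree $2^n$, and there exists a polynomial $h(R)$ of degree $2^n-2$ with $g(R)=R^2\,h(R)$.
   Context: Here $R$ may be complex; for each $\mu$ any fixed choice of square root of $k_\mu^2R-\omega_\mu^2$ may be used, since the product runs over all sign choices and is therefore independent of the choice of branches. *)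

(* Defs.v *)
From HB Require Import structures.
From mathcomp Require Import all_boot all_order all_algebra.
From mathcomp Require Import complex.
Set Implicit Arguments. Unset Strict Implicit. Unset Printing Implicit Defensive.
Import Order.TTheory GRing.Theory Num.Theory.
Local Open Scope ring_scope.

(* g(R) = prod_{sigma in {-1,+1}^n} ( -R + 1/n sum_mu sigma_mu s_mu ),
   where s_mu is a chosen square root of k_mu^2 R - w_mu^2.
   sigma is encoded as a boolean function: sigma_mu = (-1)^(sg mu). *)
Definition gprod (F : rcfType) (n : nat) (s : 'I_n -> F[i]) (x : F[i]) : F[i] :=
  \prod_(sg : {ffun 'I_n -> bool})
     (- x + (n%:R)^-1 * \sum_(mu < n) (-1) ^+ (sg mu) * s mu).

(* Main.v *)
Require Import Defs.
From HB Require Import structures.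
From mathcomp Require Import all_boot all_order all_algebra.
From mathcomp Require Import complex.
From mathcomp Require Import ring lra zify.
Import Order.TTheory GRing.Theory Num.Theory.
Local Open Scope ring_scope.
Set Implicit Arguments. Unset Strict Implicit. Unset Printing Implicit Defensive.


Fixpoint prodS (B : comNzRingType) (n : nat) : ('I_n -> B) -> B -> B :=
  match n with
  | 0 => fun _ y => y
  | n'.+1 => fun a y => prodS (fun j => a (lift ord0 j)) (y + a ord0) *
                        prodS (fun j => a (lift ord0 j)) (y - a ord0)
  end.

Lemma prod_ffunE (B : comNzRingType) (n : nat) (a : 'I_n -> B) (y : B) :
  \prod_(sg : {ffun 'I_n -> bool}) (y + \sum_(mu < n) (-1) ^+ (sg mu) * a mu)
  = prodS a y.
Proof.
elim: n a y => [|n IH] a y /=.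
  under eq_bigr do rewrite big_ord0 addr0.
  by rewrite prodr_const card_ffun !card_ord /= expr1.
pose f (p : bool * {ffun 'I_n -> bool}) : {ffun 'I_n.+1 -> bool} :=
  [ffun i => if unlift ord0 i is Some j then p.2 j else p.1].
pose g (sg : {ffun 'I_n.+1 -> bool}) := (sg ord0, [ffun j => sg (lift ord0 j)]).
have fK : cancel f g.
  by case=> b h; rewrite /f /g /= ffunE unlift_none; congr pair; apply/ffunP=> j; rewrite !ffunE liftK.
have gK : cancel g f.
  move=> sg; apply/ffunP=> i; rewrite /f /g !ffunE /=.
  by case: unliftP => [j ->|->]; rewrite ?ffunE.
rewrite (reindex f) /=; last by apply: onW_bij; exists g.
rewrite -(pair_big xpredT xpredT (fun b h => y + \sum_(mu < n.+1) (-1) ^+ f (b, h) mu * a mu)) /=.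
rewrite big_bool /= mulrC -!IH.
congr (_ * _); apply: eq_bigr => h _; rewrite big_ord_recl /f !ffunE unlift_none;
  under eq_bigr do rewrite ffunE liftK; rewrite /= ?expr0 ?expr1 ?mul1r ?mulN1r addrA //.
Qed.

Section Gen.
Variable A : comNzRingType.
Local Notation C := {poly {poly A}}.

Definition eo_step (t : {poly A}) (c : {poly A}) (p : C * C) : C * C :=
  (p.1 * 'X + t%:P * p.2 + c%:P, p.1 + p.2 * 'X).
Definition eo (t : {poly A}) (l : seq {poly A}) := foldr (eo_step t) (0,0) l.
Definition stepP (t : {poly A}) (P : C) : C :=
  (eo t (polyseq P)).1 ^+ 2 - t%:P * (eo t (polyseq P)).2 ^+ 2.
Fixpoint Pn (n : nat) : ('I_n -> {poly A}) -> C :=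
  match n with
  | 0 => fun _ => 'X
  | n'.+1 => fun t => stepP (t ord0) (Pn (fun j => t (lift ord0 j)))
  end.

Lemma eoP (B : comNzRingType) (e : {rmorphism {poly A} -> B}) t (s y : B) :
  s ^+ 2 = e t -> forall l,
  (map_poly e (eo t l).1).[y] + s * (map_poly e (eo t l).2).[y]
   = (map_poly e (Poly l)).[y + s].
Proof.
move=> hs; elim=> [|c l IH] /=; first by rewrite !rmorph0 !horner0 mulr0 addr0.
rewrite cons_poly_def /eo_step /=.
rewrite !(rmorphD, rmorphM) /= !map_polyX !map_polyC /=.
rewrite !(hornerD, hornerM, hornerX, hornerC) -IH -hs.
ring.
Qed.

Lemma PnP n (t : 'I_n -> {poly A}) (B : comNzRingType)
  (e : {rmorphism {poly A} -> B}) (s : 'I_n -> B) (y : B) :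
  (forall mu, s mu ^+ 2 = e (t mu)) ->
  prodS s y = (map_poly e (Pn t)).[y].
Proof.
elim: n t s y => [|n IH] t s y hs /=; first by rewrite map_polyX hornerX.
have hs1 : forall mu, s (lift ord0 mu) ^+ 2 = e (t (lift ord0 mu)) by move=> mu; rewrite hs.
rewrite !(IH (fun j => t (lift ord0 j))) //.
have h1 := eoP y (hs ord0) (polyseq (Pn (fun j => t (lift ord0 j)))).
have h2 : s ord0 * - 1 = - s ord0 by rewrite mulrN1.
have hs' : (- s ord0) ^+ 2 = e (t ord0) by rewrite sqrrN hs.
have h3 := eoP y hs' (polyseq (Pn (fun j => t (lift ord0 j)))).
rewrite polyseqK in h1 h3.
rewrite -h1 -h3 /stepP.
rewrite !(rmorphB, rmorphM, rmorphXn) /= !map_polyC /=.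
rewrite !(hornerD, hornerN, hornerM, hornerXn, hornerC) -(hs ord0).
ring.
Qed.

Definition wt (D : nat) (Q : C) :=
  forall j, Q`_j != 0 -> (2 * (size (Q`_j)%R).-1 + j < D)%N.

Lemma wt0 D : wt D 0.
Proof. by move=> j; rewrite coef0 eqxx. Qed.

Lemma wt_le D D' Q : (D <= D')%N -> wt D Q -> wt D' Q.
Proof. by move=> hD hQ j /hQ; lia. Qed.

Lemma wt_coef D Q j : wt D Q -> (D <= j)%N -> Q`_j = 0.
Proof. by move=> hQ hj; apply/eqP; apply: contraTT hj => /hQ; lia. Qed.

Lemma wt_eq0 Q : wt 0 Q -> Q = 0.
Proof. by move=> hQ; apply/polyP => j; rewrite coef0 (wt_coef hQ). Qed.

Lemma addK (c d : {poly A}) N :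
  (c != 0 -> (2 * (size c)%R.-1 < N)%N) -> (d != 0 -> (2 * (size d)%R.-1 < N)%N) ->
  (c + d != 0 -> (2 * (size (c + d)%R).-1 < N)%N).
Proof.
move=> hc hd hcd.
have [c0|c0] := eqVneq c 0; first by move: hcd; rewrite c0 !add0r; exact: hd.
have [->|d0] := eqVneq d 0; first by rewrite addr0; exact: hc.
have := size_polyD c d; have := hc c0; have := hd d0; lia.
Qed.

Lemma wtD D P Q : wt D P -> wt D Q -> wt D (P + Q).
Proof.
move=> hP hQ j; rewrite coefD => h.
have := @addK (P`_j) (Q`_j) (D - j)%N.
have h1 : P`_j != 0 -> (2 * (size (P`_j))%R.-1 < D - j)%N by move=> /hP; lia.
have h2 : Q`_j != 0 -> (2 * (size (Q`_j))%R.-1 < D - j)%N by move=> /hQ; lia.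
move=> /(_ h1 h2 h); move: (size _).-1 => x; lia.
Qed.

Lemma wtN D Q : wt D Q -> wt D (- Q).
Proof. by move=> hQ j; rewrite coefN oppr_eq0 size_polyN; exact: hQ. Qed.

Lemma wtB D P Q : wt D P -> wt D Q -> wt D (P - Q).
Proof. by move=> hP hQ; apply: wtD => //; exact: wtN. Qed.

Lemma wtM a b N P Q : wt a P -> wt b Q -> ((0 < a)%N -> (0 < b)%N -> ((a + b).-1 <= N)%N) ->
  wt N (P * Q).
Proof.
move=> hP hQ hN.
have [a0|a0] := posnP a; first by rewrite (wt_eq0 (wt_le _ hP)) ?a0 // mul0r; exact: wt0.
have [b0|b0] := posnP b; first by rewrite (wt_eq0 (wt_le _ hQ)) ?b0 // mulr0; exact: wt0.
have {}hN := hN a0 b0.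
move=> j; rewrite coefM.
have -> : (2 * (size (\sum_(i < j.+1) P`_i * Q`_(j - i))%R).-1 + j < N)%N =
   (2 * (size (\sum_(i < j.+1) P`_i * Q`_(j - i))%R).-1 < N - j)%N.
  by apply/idP/idP; lia.
elim/big_ind: _ => [|c d hc hd|i _]; first by rewrite eqxx.
  exact: addK.
have [->|p0] := eqVneq P`_i 0; first by rewrite mul0r eqxx.
have [->|q0] := eqVneq Q`_(j - i) 0; first by rewrite mulr0 eqxx.
move=> _; have := size_polyMleq P`_i Q`_(j - i).
have := hP _ p0; have := hQ _ q0; have := ltn_ord i.
have : (size (P`_i)%R > 0)%N by rewrite size_poly_gt0.
have : (size (Q`_(j - i))%R > 0)%N by rewrite size_poly_gt0.
move: (size (P`_i * Q`_(j - i))) (size (P`_i)) (size (Q`_(j - i))) => r p q; lia.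
Qed.

Lemma wtX : wt 2 'X.
Proof.
move=> j; rewrite coefX; have [->|nj] := eqVneq j 1%N; first by rewrite size_poly1.
by rewrite eqxx.
Qed.

Lemma wtC D (c : {poly A}) : (c != 0 -> (2 * (size c)%R.-1 < D)%N) -> wt D c%:P.
Proof.
move=> hc j; rewrite coefC; have [->|nj] := eqVneq j 0%N; first by rewrite addn0.
by rewrite eqxx.
Qed.

Lemma coefM_top a b P Q : wt a.+1 P -> wt b.+1 Q -> (P * Q)`_(a + b) = P`_a * Q`_b.
Proof.
move=> hP hQ; rewrite coefM.
have ha : (a < (a + b).+1)%N by lia.
rewrite (bigD1 (Ordinal ha)) //= big1 ?addr0 ?addKn //.
move=> i /eqP hi.
have [lt|ge] := ltnP i a.
  by rewrite (wt_coef hQ) ?mulr0 //; lia.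
rewrite (wt_coef hP) ?mul0r //.
have : nat_of_ord i != a by apply/eqP => h; apply: hi; apply: val_inj.
lia.
Qed.


Lemma eo_wt (t : {poly A}) : (size t <= 2)%N -> forall l D, wt D (Poly l) ->
  [/\ wt D (eo t l).1, wt D.-1 (eo t l).2 & (eo t l).1`_D.-1 = (Poly l)`_D.-1].
Proof.
move=> ht; elim=> [|c l IH] D /=.
  by move=> _; rewrite coef0; split; [exact: wt0|exact: wt0|].
rewrite cons_poly_def => hP.
have hl : wt D.-1 (Poly l).
  move=> j hj; have := hP j.+1; rewrite coefD coefMX coefC /= addr0 => /(_ hj); lia.
have hc : c != 0 -> (2 * (size c)%R.-1 < D)%N.
  by move=> hc; have := hP 0%N; rewrite coefD coefMX coefC /= add0r => /(_ hc); lia.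
have [E1 O1 T1] := IH _ hl.
rewrite /eo_step /=.
case: D hP hl hc E1 O1 T1 => [|D] hP hl hc E1 O1 T1 /=.
  have c0 : c = 0 by apply/eqP; apply: contraT => /hc.
  rewrite (wt_eq0 E1) (wt_eq0 O1) c0 !(mul0r, mulr0, add0r, addr0).
  by split; [exact: wt0|exact: wt0|rewrite coef0 coefMX].
have ht3 : wt 3 t%:P.
  apply: wtC => t0; have := size_poly_gt0 t; rewrite t0; move: (size t) ht => x; lia.
split.
- apply: wtD; first apply: wtD.
  + by apply: wtM E1 wtX _; lia.
  + by apply: wtM ht3 O1 _; lia.
  + exact: wtC.
- apply: wtD; first exact: (wt_le _ E1).
  by apply: wtM O1 wtX _; lia.
- rewrite !coefD coefMX coefCM coefC (wt_coef O1) ?mulr0 ?addr0; last by lia.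
  rewrite coefMX; move: T1; case: D {hP hl hc E1 O1} => [|D] //= ->.
  by [].
Qed.

Lemma wt3 (t : {poly A}) : (size t <= 2)%N -> wt 3 t%:P.
Proof.
move=> ht; apply: wtC => t0; have := size_poly_gt0 t; rewrite t0; move: (size t) ht => x; lia.
Qed.

Lemma stepP_wt (t : {poly A}) (P : C) D : (size t <= 2)%N -> wt D.+1 P -> P`_D = 1 ->
  wt (D + D).+1 (stepP t P) /\ (stepP t P)`_(D + D) = 1.
Proof.
move=> ht hP hD.
have hP' : wt D.+1 (Poly (polyseq P)) by rewrite polyseqK.
have [E1 O1 T1] := eo_wt ht hP'.
rewrite polyseqK /= in T1.
have O2 : wt (D + D).-1 ((eo t P).2 ^+ 2) by rewrite expr2; apply: (wtM O1 O1); lia.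
split.
  apply: wtB; first by rewrite expr2; apply: (wtM E1 E1); lia.
  by apply: wtM (wt3 ht) O2 _; lia.
rewrite /stepP coefB coefCM (wt_coef O2) ?mulr0 ?subr0; last by lia.
by rewrite expr2 (coefM_top E1 E1) T1 hD mulr1.
Qed.

Lemma Pn_wt n (t : 'I_n -> {poly A}) : (forall mu, size (t mu) <= 2)%N ->
  wt (2 ^ n).+1 (Pn t) /\ (Pn t)`_(2 ^ n) = 1.
Proof.
elim: n t => [|n IH] t ht /=.
  by split; [exact: wtX|rewrite coefX].
have [h1 h2] := IH (fun j => t (lift ord0 j)) (fun j => ht _).
rewrite expnS mul2n -addnn.
exact: stepP_wt.
Qed.

Lemma g_size (P : C) D : wt D.+1 P -> P`_D = 1 -> ~~ odd D -> size (P.[- 'X]) = D.+1.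
Proof.
move=> hP hD hodd.
have hs : (size P <= D.+1)%N by apply/leq_sizeP => j hj; apply: (wt_coef hP).
rewrite (horner_coef_wide _ hs) big_ord_recr /= hD mul1r exprNn -signr_odd (negbTE hodd) expr0 mul1r.
rewrite addrC size_polyDl size_polyXn //.
rewrite ltnS; elim/big_ind: _ => [|p q hp hq|i _]; first by rewrite size_poly0.
  by rewrite (leq_trans (size_polyD _ _)) // geq_max hp hq.
have [->|p0] := eqVneq P`_i 0; first by rewrite mul0r size_poly0.
have := hP _ p0.
have := size_polyMleq (P`_i) ((- 'X) ^+ i).
have := size_poly_exp_leq (- 'X : {poly A}) i.
rewrite size_polyN size_polyX /= mul1n.
have := ltn_ord i; have : (size (P`_i)%R > 0)%N by rewrite size_poly_gt0.
move: (size (P`_i * (- 'X) ^+ i)) (size (P`_i)) (size ((- 'X) ^+ i)) => r p q.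

lia.
Qed.
End Gen.

Lemma nil4 (R : comNzRingType) (d x1 x2 x3 x4 r : R) : d ^+ 4 = 0 ->
  d * x1 * (d * x2 * (d * x3 * (d * x4 * r))) = 0.
Proof.
move=> h; have -> : d * x1 * (d * x2 * (d * x3 * (d * x4 * r))) = d ^+ 4 * (x1 * x2 * x3 * x4 * r) by ring.
by rewrite h mul0r.
Qed.

Lemma nil2 (R : comNzRingType) (d x1 x2 r : R) : d ^+ 4 = 0 ->
  d ^+ 2 * x1 * (d ^+ 2 * x2 * r) = 0.
Proof.
move=> h; have -> : d ^+ 2 * x1 * (d ^+ 2 * x2 * r) = d ^+ 4 * (x1 * x2 * r) by ring.
by rewrite h mul0r.
Qed.

Section Main.
Variable F : rcfType.
Local Notation A := F[i].
Local Notation h4 := ('X^4 : {poly A}).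
Local Notation B := {poly %/ h4}.

Definition tpoly (n : nat) (w k : 'I_n -> F) (mu : 'I_n) : {poly A} :=
  ((n%:R^-1 * ((k mu)%:C)%C) ^+ 2)%:P * 'X +
  (('i%C * (n%:R^-1 * ((w mu)%:C)%C)) ^+ 2)%:P.

Lemma tpoly_size n w k mu : (size (@tpoly n w k mu) <= 2)%N.
Proof.
rewrite /tpoly; apply: leq_trans (size_polyD _ _) _; rewrite geq_max.
rewrite (leq_trans (size_polyC_leq1 _)) // andbT.
apply: leq_trans (size_polyMleq _ _) _; rewrite size_polyX.
by move: (size_polyC_leq1 ((n%:R^-1 * ((k mu)%:C)%C) ^+ 2)); case: (size _) => [|[|m]].
Qed.

Lemma gprod_eq n w k (x : A) (s : 'I_n -> A) :
  (forall mu, s mu ^+ 2 = ((k mu)%:C)%C ^+ 2 * x - ((w mu)%:C)%C ^+ 2) ->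
  gprod s x = ((Pn (tpoly w k)).[- 'X]).[x].
Proof.
move=> hs; rewrite /gprod.
under eq_bigr do rewrite mulr_sumr; under eq_bigr do under eq_bigr do rewrite mulrCA.
rewrite (prod_ffunE (fun mu => n%:R^-1 * s mu)).
rewrite (@PnP _ _ (tpoly w k) _ (horner_eval x)).
  have -> : - x = horner_eval x (- 'X) by rewrite /horner_eval hornerN hornerX.
  by rewrite horner_map.
move=> mu; rewrite -[RHS]/((tpoly w k mu).[x]) /tpoly hornerD hornerM hornerX !hornerC.
rewrite !exprMn sqr_i hs; ring.
Qed.

Lemma qd4 : (in_qpoly h4 'X) ^+ 4 = 0.
Proof.
rewrite -rmorphXn; apply/val_inj => /=; rewrite mk_monic_Xn /=.
exact: Pdiv.RingMonic.rmodpp (monicXn _ _).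
Qed.

Lemma qC c : in_qpoly h4 (c%:P) = qpolyC h4 c.
Proof.
apply/val_inj => /=; apply: Pdiv.CommonRing.rmodp_small; rewrite mk_monic_Xn /= size_polyXn.
exact: leq_ltn_trans (size_polyC_leq1 _) _.
Qed.

Lemma take4 p : in_qpoly h4 p = 0 -> take_poly 4 p = 0.
Proof.
move=> hp.
have h0 : in_qpoly h4 (take_poly 4 p) = 0.
  move: hp; rewrite -{1}[p](poly_take_drop 4) rmorphD rmorphM rmorphXn /= qd4 mulr0 addr0.
  done.
have hs : (size (take_poly 4 p) < size (mk_monic h4))%N.
  by rewrite mk_monic_Xn /= size_polyXn ltnS size_take_poly.
by have := in_qpoly_small hs; rewrite h0 => <-.
Qed.


Definition ee : {poly A} -> B := in_qpoly h4 \o comp_poly ('X^2 : {poly A}).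

Lemma g_low n (w k : 'I_n -> F) :
  \sum_(mu < n) w mu = 0 -> (exists mu, w mu != 0) ->
  ((Pn (tpoly w k)).[- 'X])`_0 = 0 /\ ((Pn (tpoly w k)).[- 'X])`_1 = 0.
Proof.
move=> hsum [nu hnu].
have n0 : (0 < n)%N by case: n w k hsum nu hnu => [|n] w k _ [].
set g := (Pn (tpoly w k)).[- 'X].
set d := in_qpoly h4 'X.
pose K := qpolyC h4.
pose a mu : A := 'i%C * (n%:R^-1 * ((w mu)%:C)%C).
pose b mu : A := n%:R^-1 * ((k mu)%:C)%C.
pose c mu : A := if w mu == 0 then 0 else b mu ^+ 2 / (2%:R * a mu).
pose b' mu : A := if w mu == 0 then b mu else 0.
pose s mu : B := K (a mu) + K (c mu) * d ^+ 2 + K (b' mu) * d.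
have a0 mu : w mu = 0 -> a mu = 0 by move=> h; rewrite /a h rmorph0 !mulr0.
have an0 mu : w mu != 0 -> a mu != 0.
  move=> h; rewrite /a !mulf_neq0 //.
  - by rewrite -sqrf_eq0 sqr_i oppr_eq0 oner_eq0.
  - by rewrite invr_eq0 pnatr_eq0 -lt0n.
  - by rewrite fmorph_eq0.
have hsa : \sum_(mu < n) a mu = 0.
  by rewrite /a -mulr_sumr -mulr_sumr -rmorph_sum hsum rmorph0 !mulr0.
have e1 mu : a mu * b' mu = 0.
  by rewrite /b'; case: eqP => [/a0 ->|_]; rewrite ?mul0r ?mulr0.
have e2 mu : b' mu * c mu = 0.
  by rewrite /b' /c; case: eqP => _; rewrite ?mul0r ?mulr0.
have e3 mu : 2%:R * a mu * c mu + b' mu ^+ 2 = b mu ^+ 2.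
  rewrite /b' /c; case: eqP => [_|/eqP h]; first by rewrite mulr0 add0r.
  rewrite expr0n /= addr0 mulrC divfK // mulf_neq0 ?an0 //.
  by rewrite pnatr_eq0.
have hs mu : s mu ^+ 2 = ee (tpoly w k mu).
  rewrite /ee /= /tpoly comp_polyD comp_polyM comp_polyX !comp_polyC.
  have qX2 : in_qpoly h4 ('X^2) = d ^+ 2 by rewrite -rmorphXn.
  rewrite in_qpolyD in_qpolyM !qC qX2.
  have E1 : K (a mu) * K (b' mu) = 0 by rewrite -rmorphM e1 rmorph0.
  have E2 : K (b' mu) * K (c mu) = 0 by rewrite -rmorphM e2 rmorph0.
  have E3 : 2%:R * K (a mu) * K (c mu) + K (b' mu) ^+ 2 = K (b mu) ^+ 2.
    by rewrite -(rmorph_nat K) -!rmorphM -rmorphXn -rmorphD e3 rmorphXn.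
  rewrite -/(b mu) -/(a mu) !rmorphXn.
  have -> : s mu ^+ 2 = K (a mu) ^+ 2 + (2%:R * K (a mu) * K (c mu) + K (b' mu) ^+ 2) * d ^+ 2
     + 2%:R * (K (a mu) * K (b' mu)) * d + 2%:R * (K (b' mu) * K (c mu)) * d ^+ 3
     + K (c mu) ^+ 2 * d ^+ 4 by rewrite /s; ring.
  rewrite E1 E2 E3 qd4; ring.
have hy : - d ^+ 2 = ee (- 'X).
  have qX2 : in_qpoly h4 ('X^2) = d ^+ 2 by rewrite -rmorphXn.
  rewrite /ee /= raddfN /= comp_polyX; apply/eqP.
  by rewrite eq_sym -subr_eq0 opprK -qX2 -in_qpolyD addNr in_qpoly0.
have hP := @PnP _ _ (tpoly w k) _ ee s (- d ^+ 2) hs.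
rewrite hy horner_map -/g -prod_ffunE -hy in hP.
have hsum_s (sg : {ffun 'I_n -> bool}) : \sum_(mu < n) (-1) ^+ (sg mu) * s mu =
   K (\sum_(mu < n) (-1) ^+ (sg mu) * a mu) + K (\sum_(mu < n) (-1) ^+ (sg mu) * c mu) * d ^+ 2
   + K (\sum_(mu < n) (-1) ^+ (sg mu) * b' mu) * d.
  rewrite /K !rmorph_sum !mulr_suml -!big_split /=; apply: eq_bigr => mu _.
  rewrite /s; move: (a mu) (c mu) (b' mu) => x y z; rewrite !rmorphM rmorph_sign; ring.
have hA (sg : {ffun 'I_n -> bool}) bt : (forall mu, w mu != 0 -> sg mu = bt) ->
    \sum_(mu < n) (-1) ^+ (sg mu) * a mu = 0.
  move=> hb; rewrite (eq_bigr (fun mu => (-1) ^+ bt * a mu)) ?hsa; last first.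
    by move=> mu _; case: (eqVneq (w mu) 0) => [/a0 ->|/hb ->]; rewrite ?mulr0.
  by rewrite -mulr_sumr hsa mulr0.
have hF (sg : {ffun 'I_n -> bool}) bt : (forall mu, w mu != 0 -> sg mu = bt) ->
   - d ^+ 2 + \sum_(mu < n) (-1) ^+ (sg mu) * s mu =
   d * (- d + K (\sum_(mu < n) (-1) ^+ (sg mu) * c mu) * d + K (\sum_(mu < n) (-1) ^+ (sg mu) * b' mu)).
  by move=> hb; rewrite hsum_s (hA _ _ hb) /K rmorph0; ring.
have hF2 (sg : {ffun 'I_n -> bool}) bt : (forall mu, w mu != 0 -> sg mu = bt) ->
   (forall mu, w mu != 0) ->
   - d ^+ 2 + \sum_(mu < n) (-1) ^+ (sg mu) * s mu =
   d ^+ 2 * (- 1 + K (\sum_(mu < n) (-1) ^+ (sg mu) * c mu)).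
  move=> hb hall; rewrite hsum_s (hA _ _ hb) (@big1 _ _ _ _ _ _ (fun mu => (-1) ^+ (sg mu) * b' mu)).
    by rewrite /K !rmorph0; ring.
  by move=> mu _; rewrite /b' (negbTE (hall mu)) mulr0.
have hz : \prod_(sg : {ffun 'I_n -> bool}) (- d ^+ 2 + \sum_(mu < n) (-1) ^+ (sg mu) * s mu) = 0.
  pose s0 : {ffun 'I_n -> bool} := [ffun => false].
  pose s1 : {ffun 'I_n -> bool} := [ffun => true].
  have h10 : s1 != s0 by apply/eqP => /ffunP /(_ nu); rewrite !ffunE.
  have [[mu0 /eqP hmu0]|hall] : (exists mu0, w mu0 == 0) \/ (forall mu, w mu != 0).
    case: (pickP (fun mu => w mu == 0)) => [mu0 h|h]; [left; exists mu0 | right => mu; rewrite h] => //.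
  - have numu : nu != mu0 by apply: contraNneq hnu => ->; rewrite hmu0.
    pose s2 : {ffun 'I_n -> bool} := [ffun j => j == mu0].
    pose s3 : {ffun 'I_n -> bool} := [ffun j => j != mu0].
    have h20 : s2 != s0 by apply/eqP => /ffunP /(_ mu0); rewrite !ffunE eqxx.
    have h21 : s2 != s1 by apply/eqP => /ffunP /(_ nu); rewrite !ffunE (negbTE numu).
    have h30 : s3 != s0 by apply/eqP => /ffunP /(_ nu); rewrite !ffunE numu.
    have h31 : s3 != s1 by apply/eqP => /ffunP /(_ mu0); rewrite !ffunE eqxx.
    have h32 : s3 != s2 by apply/eqP => /ffunP /(_ mu0); rewrite !ffunE eqxx.
    have wne j : w j != 0 -> j != mu0 by apply: contraNneq => ->; rewrite hmu0.
    rewrite (bigD1 s0) // (bigD1 s1) ?h10 // (bigD1 s2) ?h20 ?h21 // (bigD1 s3) ?h30 ?h31 ?h32 //=.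
    rewrite (hF s0 false) ?(hF s1 true) ?(hF s2 false) ?(hF s3 true); first last.
    + by move=> j _; rewrite ffunE.
    + by move=> j _; rewrite ffunE.
    + by move=> j /wne; rewrite ffunE => /negbTE.
    + by move=> j /wne; rewrite ffunE.
    by apply: nil4; exact: qd4.
  - rewrite (bigD1 s0) // (bigD1 s1) ?h10 //=.
    rewrite (hF2 s0 false) ?(hF2 s1 true) //; last by move=> j _; rewrite ffunE.
      by apply: nil2; exact: qd4.
    by move=> j _; rewrite ffunE.
rewrite hz in hP.
have := take4 (esym hP).
move=> /polyP hT; split.
  by have := hT 0%N; rewrite coef_take_poly coef0 /= coef_comp_poly_Xn.
by have := hT 2%N; rewrite coef_take_poly coef0 /= coef_comp_poly_Xn.
Qed.



End Main.

Unset Implicit Arguments.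

Theorem proposition3 (F : rcfType) (n : nat) (w k : 'I_n -> F) :
  (2 <= n)%N ->
  (forall mu, 0 < k mu) ->
  \sum_(mu < n) w mu = 0 ->
  (exists mu, w mu != 0) ->
  (forall mu nu : 'I_n, (mu <= nu)%N -> `|w mu / k mu| <= `|w nu / k nu|) ->
  exists g : {poly F[i]},
    size g = (2 ^ n).+1 /\
    (forall (x : F[i]) (s : 'I_n -> F[i]),
        (forall mu, s mu ^+ 2 = ((k mu)%:C)%C ^+ 2 * x - ((w mu)%:C)%C ^+ 2) ->
        gprod s x = g.[x]) /\
    exists h : {poly F[i]}, size h = (2 ^ n - 2).+1 /\ g = 'X ^+ 2 * h.
Proof.
move=> n2 kpos hsum hw hord.
have [hwt htop] := @Pn_wt _ n (tpoly w k) (fun mu => @tpoly_size F n w k mu).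
set g := (Pn (tpoly w k)).[- 'X].
have hodd : ~~ odd (2 ^ n) by rewrite oddX /=; by case: (n) n2 => [|[|m]].
have hsz : size g = (2 ^ n).+1 := g_size hwt htop hodd.
exists g; split => //; split.
  by move=> x s hs; exact: (@gprod_eq F n w k x s hs).
have [g0 g1] := @g_low F n w k hsum hw.
exists (drop_poly 2 g).
have ht : take_poly 2 g = 0.
  by apply/polyP => j; rewrite coef_take_poly coef0; case: j => [|[|j]] //=.
have hg : g = 'X ^+ 2 * drop_poly 2 g.
  by rewrite -{1}(poly_take_drop 2 g) mulrC ht add0r.
split => //.
have hd0 : drop_poly 2 g != 0.
  by apply/eqP => h0; move: hsz; rewrite hg h0 mulr0 size_poly0.
have := size_mulXn 2 hd0; rewrite mulrC -hg hsz.
have := size_poly_gt0 (drop_poly 2 g); rewrite hd0.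
move: (size (drop_poly 2 g)) (2 ^ n)%N => m p; lia.
Qed.
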